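(* Let $N_A,N_B\ge1$ be integers, $\overline{\gamma}_B>0$, $\sigma\in(0,1)$ and $R_b\ge0$. Define $p_{suc}(\mu)=1-\operatorname{P}\!\left(N_B,\mu/\overline{\gamma}_B\right)^{N_A}$ and $\alpha=\Gamma(N_B+1)^{1/N_B}$. If $p_{suc}(2^{R_b}-1)\ge\sigma$, then $$R_b\le\log_2\!\left(1+\overline{\gamma}_B\,\alpha\,\log\!\left(\left(1-(1-\sigma)^{\frac{1}{N_A N_B}}\right)^{-1}\right)\right),$$ where $\log$ is the natural logarithm.
   Context: $\operatorname{P}(s,z)=\gamma(s,z)/\Gamma(s)$ denotes the regularized lower incomplete gamma function, $\gamma(s,z)=\int_0^z t^{s-1}e^{-t}\,dt$. $p_{suc}(\mu)$ is the probability that the post-selection, post-combining SNR of the legitimate link exceeds $\mu$, for transmit antenna selection over $N_A$ antennas and maximal ratio combining over $N_B$ antennas in Rayleigh fading with average per-branch SNR $\overline{\gamma}_B$. *)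

(* Defs.v *)
From Stdlib Require Import Reals Lra Arith Factorial.
Open Scope R_scope.

Definition lig_integrand (n : nat) (t : R) : R := t ^ (n - 1) * exp (- t).

Lemma lig_integrand_cont (n : nat) : continuity (lig_integrand n).
Proof.
  unfold lig_integrand. apply continuity_mult.
  - apply derivable_continuous, derivable_pow.
  - apply (continuity_comp (fun t => - t) exp).
    + apply continuity_opp, derivable_continuous, derivable_id.
    + apply derivable_continuous, derivable_exp.
Qed.

Lemma lig_integrable (n : nat) (z : R) :
  Riemann_integrable (lig_integrand n) 0 z.
Proof.
  destruct (Rle_dec 0 z) as [H|H].
  - apply continuity_implies_RiemannInt; [exact H|].
    intros x _; apply lig_integrand_cont.
  - apply RiemannInt_P1, continuity_implies_RiemannInt; [lra|].
    intros x _; apply lig_integrand_cont.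
Qed.

Definition lower_inc_gamma (n : nat) (z : R) : R := RiemannInt (lig_integrable n z).

Definition Gamma_nat (n : nat) : R := INR (Factorial.fact (n - 1)).

Definition reg_lower_gamma (n : nat) (z : R) : R := lower_inc_gamma n z / Gamma_nat n.

(* success probability: TAS over NA antennas, MRC over NB antennas, Rayleigh *)
Definition p_suc (NA NB : nat) (gB mu : R) : R := 1 - (reg_lower_gamma NB (mu / gB)) ^ NA.

Definition alpha (NB : nat) : R := Rpower (Gamma_nat (NB + 1)) (/ INR NB).

Definition log2 (x : R) : R := ln x / ln 2.

(* Main.v *)
Require Import Defs.
From Stdlib Require Import Reals Lra Lia Factorial Classical.
From Coquelicot Require Import Coquelicot.
Open Scope R_scope.

Fixpoint Tsum (n : nat) (x : R) : R :=
  match n with O => 0 | S k => Tsum k x + x ^ k / INR (fact k) end.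

Lemma fact_pos' k : 0 < INR (fact k).
Proof. apply lt_0_INR, lt_O_fact. Qed.

Lemma Tsum_derive n x : is_derive (Tsum (S n)) x (Tsum n x).
Proof.
  induction n as [|n IH].
  - apply (is_derive_ext (fun t => 0 + t ^ 0 / INR (fact 0))); [reflexivity|].
    auto_derive; [simpl; lra|]. simpl. ring.
  - change (Tsum (S (S n))) with (fun x => Tsum (S n) x + x ^ (S n) / INR (fact (S n))).
    replace (Tsum (S n) x) with (Tsum n x + x ^ n / INR (fact n)) by reflexivity.
    pose proof (fact_pos' n).
    assert (H2 : is_derive (fun t => t ^ S n / INR (fact (S n))) x (x ^ n / INR (fact n))).
    { auto_derive; [exact I|]. rewrite plus_INR, mult_INR.
      change (match n with 0%nat => 1 | S _ => INR n + 1 end) with (INR (S n)). rewrite S_INR.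
      pose proof (pos_INR n). field. nra. }
    exact (is_derive_plus _ _ _ _ _ IH H2).
Qed.

Lemma Tsum_0 n : Tsum (S n) 0 = 1.
Proof.
  induction n as [|n IH].
  - simpl. field.
  - change (Tsum (S (S n)) 0) with (Tsum (S n) 0 + 0 ^ (S n) / INR (fact (S n))).
    rewrite IH, pow_i by lia. unfold Rdiv. ring.
Qed.


Lemma closed_form N x : (1 <= N)%nat -> reg_lower_gamma N x = 1 - exp (- x) * Tsum N x.
Proof.
  intros HN. destruct N as [|n]; [lia|].
  unfold reg_lower_gamma, lower_inc_gamma, Gamma_nat.
  rewrite <- RInt_Reals.
  replace (S n - 1)%nat with n by lia.
  pose (G := fun t => - INR (fact n) * (exp (- t) * Tsum (S n) t)).
  assert (H : is_RInt (lig_integrand (S n)) 0 x (minus (G x) (G 0))).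
  { apply (@is_RInt_derive R_CompleteNormedModule G).
    - intros t _. unfold G, lig_integrand.
      replace (S n - 1)%nat with n by lia.
      pose proof (fact_pos' n).
      apply (is_derive_ext (fun t => - INR (fact n) * (exp (- t) * Tsum (S n) t))); [reflexivity|].
      replace (t ^ n * exp (- t)) with (- INR (fact n) * ((-1 * exp (-t)) * Tsum (S n) t + exp (-t) * Tsum n t)).
      2:{ simpl Tsum. field. lra. }
      assert (H1 : is_derive (fun t => exp (- t)) t (-1 * exp (- t))) by (auto_derive; [auto|ring]).
      exact (is_derive_scal _ _ _ _ (Derive.is_derive_mult _ _ _ _ _ H1 (Tsum_derive n t))).
    - intros t _. apply continuity_pt_filterlim. apply lig_integrand_cont. }
  rewrite (is_RInt_unique _ _ _ _ H). change (minus (G x) (G 0)) with (G x - G 0). unfold G.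
  rewrite Tsum_0, Ropp_0, exp_0. pose proof (fact_pos' n). field. lra.
Qed.
Lemma mono_le (g dg : R -> R) (x y : R) : x <= y ->
  (forall t, x <= t <= y -> is_derive g t (dg t)) ->
  (forall t, x <= t <= y -> 0 <= dg t) -> g x <= g y.
Proof.
  intros Hxy Hd Hp.
  destruct (MVT_gen g x y dg) as [c [Hc Heq]].
  - intros t Ht. apply Hd. rewrite Rmin_left in Ht by lra. rewrite Rmax_right in Ht by lra. lra.
  - intros t Ht. rewrite Rmin_left in Ht by lra. rewrite Rmax_right in Ht by lra.
    apply continuity_pt_filterlim. apply (ex_derive_continuous g). exists (dg t). apply Hd; lra.
  - rewrite Rmin_left in Hc by lra. rewrite Rmax_right in Hc by lra.
    assert (0 <= dg c * (y - x)) by (apply Rmult_le_pos; [apply Hp|]; lra). lra.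
Qed.

Lemma once (g dg : R -> R) :
  (forall t, is_derive g t (dg t)) -> g 0 = 0 ->
  (forall t u, 0 <= t <= u -> dg t < 0 -> dg u <= 0) ->
  forall x y, 0 <= x <= y -> g x < 0 -> g y <= g x.
Proof.
  intros Hd H0 Hs x y Hxy Hgx.
  destruct (classic (exists t, 0 <= t <= x /\ dg t < 0)) as [[t [Ht Hdt]]|Hn].
  - assert (- g x <= - g y); [|lra].
    apply (mono_le (fun z => - g z) (fun z => - dg z)); [lra| |].
    + intros z _. apply (is_derive_opp g). apply Hd.
    + intros z Hz. assert (dg z <= 0) by (apply (Hs t z); [lra|exact Hdt]). lra.
  - exfalso. assert (g 0 <= g x); [|lra].
    apply (mono_le g dg); [lra| intros; apply Hd |].
    intros z Hz. apply Rnot_lt_le. intro Hc. apply Hn. exists z. split; [lra|exact Hc].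
Qed.

Lemma exp_pow' n y : exp y ^ n = exp (INR n * y).
Proof.
  induction n as [|n IH].
  - simpl. rewrite Rmult_0_l, exp_0. reflexivity.
  - rewrite S_INR. simpl. rewrite IH, <- exp_plus. f_equal. ring.
Qed.

Lemma exp_le y z : y <= z -> exp y <= exp z.
Proof. intros [H|H]; [left; apply exp_increasing; exact H|subst; lra]. Qed.

Lemma fact_le_pow N : INR (fact N) <= INR N ^ N.
Proof.
  induction N as [|n IH].
  - simpl. lra.
  - rewrite fact_simpl, mult_INR. change (INR (S n) ^ S n) with (INR (S n) * INR (S n) ^ n).
    apply Rmult_le_compat_l; [apply pos_INR|].
    apply Rle_trans with (INR n ^ n); [exact IH|].
    apply pow_incr. split; [apply pos_INR|]. rewrite S_INR. lra.
Qed.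

Lemma params N s : (1 <= N)%nat -> 0 < s -> s ^ N * INR (fact N) = 1 ->
  s <= 1 /\ 1 <= s * INR N.
Proof.
  intros HN Hs Heq. split.
  - apply Rnot_lt_le. intro Hc.
    assert (1 < s ^ N) by (apply Rlt_pow_R1; [lra|lia]).
    assert (1 <= INR (fact N)) by (apply (le_INR 1); apply lt_O_fact).
    nra.
  - apply Rnot_lt_le. intro Hc.
    assert (0 <= (s * INR N) ^ N < 1) by (apply pow_lt_1_compat; [split; [apply Rmult_le_pos; [lra|apply pos_INR]|lra]|lia]).
    rewrite Rpow_mult_distr in H.
    pose proof (fact_le_pow N).
    assert (0 <= s ^ N) by (apply pow_le; lra).
    nra.
Qed.

Lemma b_exists N s : (1 <= N)%nat -> 0 < s -> s ^ N * INR (fact N) = 1 ->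
  exists b, 0 <= b /\ b <= s /\ (INR N - 1) * b = 1 - s.
Proof.
  intros HN Hs Heq. destruct (params N s HN Hs Heq) as [H1 H2].
  destruct (Nat.eq_dec N 1) as [E|E].
  - subst. simpl in Heq. exists 0. lra.
  - assert (2 <= INR N) by (apply (le_INR 2); lia).
    exists ((1 - s) / (INR N - 1)). split; [|split].
    + apply Rdiv_le_0_compat; lra.
    + apply Rmult_le_reg_r with (INR N - 1); [lra|]. unfold Rdiv.
      rewrite Rmult_assoc, Rinv_l by lra. nra.
    + field. lra.
Qed.

Lemma tsum_bound n y : 0 <= y -> 0 <= Tsum n y <= INR n * (1 + y) ^ n.
Proof.
  intro Hy. induction n as [|n IH].
  - simpl. lra.
  - change (Tsum (S n) y) with (Tsum n y + y ^ n / INR (fact n)).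
    pose proof (fact_pos' n).
    assert (0 <= y ^ n / INR (fact n)) by (apply Rdiv_le_0_compat; [apply pow_le|]; lra).
    assert (y ^ n / INR (fact n) <= (1 + y) ^ n).
    { assert (1 <= INR (fact n)) by (apply (le_INR 1); apply lt_O_fact).
      assert (y ^ n <= (1 + y) ^ n) by (apply pow_incr; lra).
      apply Rle_trans with (y ^ n); [|lra].
      unfold Rdiv. assert (0 <= y ^ n) by (apply pow_le; lra).
      assert (/ INR (fact n) <= 1) by (rewrite <- Rinv_1; apply Rinv_le_contravar; lra).
      nra. }
    assert ((1 + y) ^ n <= (1 + y) ^ S n) by (apply Rle_pow; [lra|lia]).
    assert (0 <= INR n) by apply pos_INR.
    rewrite S_INR. nra.
Qed.

Lemma exp_lower M y : (1 <= M)%nat -> 0 <= y -> ((1 + y) / INR M) ^ M <= exp y.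
Proof.
  intros HM Hy. assert (1 <= INR M) by (apply (le_INR 1); lia).
  replace (exp y) with (exp (y / INR M) ^ M).
  2:{ rewrite exp_pow'. f_equal. field. lra. }
  apply pow_incr. split.
  - apply Rdiv_le_0_compat; lra.
  - apply Rle_trans with (1 + y / INR M); [|apply exp_ineq1_le].
    unfold Rdiv. rewrite Rmult_plus_distr_r.
    assert (/ INR M <= 1) by (rewrite <- Rinv_1; apply Rinv_le_contravar; lra). lra.
Qed.

Lemma tail_bound n y : 0 <= y ->
  exp (- y) * Tsum n y <= INR n * INR (S n) ^ S n / (1 + y).
Proof.
  intro Hy. destruct (tsum_bound n y Hy) as [T1 T2].
  pose proof (exp_lower (S n) y ltac:(lia) Hy) as E.
  assert (HS : 1 <= INR (S n)) by (apply (le_INR 1); lia).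
  set (M := INR (S n)) in *. set (Q := 1 + y) in *.
  assert (HMp : 0 < M ^ S n) by (apply pow_lt; lra).
  assert (HQp : 0 < Q ^ S n) by (apply pow_lt; unfold Q; lra).
  unfold Rdiv in E. rewrite Rpow_mult_distr, pow_inv in E.
  assert (Ee : exp (- y) <= M ^ S n / Q ^ S n).
  { rewrite exp_Ropp. unfold Rdiv. 
    replace (M ^ S n * / Q ^ S n) with (/ (Q ^ S n * / M ^ S n)) by (field; lra).
    apply Rinv_le_contravar; [apply Rmult_lt_0_compat; [|apply Rinv_0_lt_compat]; lra|exact E]. }
  assert (TQ : Tsum n y * Q <= INR n * Q ^ S n).
  { change (Q ^ S n) with (Q * Q ^ n). assert (0 < Q) by (unfold Q; lra). nra. }
  apply Rmult_le_reg_r with Q; [unfold Q; lra|].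
  unfold Rdiv. rewrite (Rmult_assoc (INR n * M ^ S n)), Rinv_l by (unfold Q; lra).
  rewrite Rmult_1_r, Rmult_assoc.
  assert (0 <= exp (- y)) by (left; apply exp_pos).
  apply Rle_trans with (M ^ S n / Q ^ S n * (INR n * Q ^ S n)).
  - apply Rmult_le_compat; [lra|apply Rmult_le_pos; [lra|unfold Q; lra]|exact Ee|exact TQ].
  - right. field. lra.
Qed.

Lemma main_ineq N s x : (1 <= N)%nat -> 0 < s -> s ^ N * INR (fact N) = 1 -> 0 <= x ->
  (1 - exp (- (s * x))) ^ N <= 1 - exp (- x) * Tsum N x.
Proof.
  intros HN Hs Heq Hx.
  destruct (b_exists N s HN Hs Heq) as [b [Hb0 [Hbs Hb]]].
  destruct N as [|k]; [lia|].
  rewrite S_INR in Hb. replace (INR k + 1 - 1) with (INR k) in Hb by ring.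
  set (d := s - b).
  pose (nn := fun t => 1 - b * t - exp (- (d * t))).
  pose (dnn := fun t => - b + d * exp (- (d * t))).
  pose (m := fun t => s * t * exp (- (b * t)) - 1 + exp (- (b * t)) * exp (- (d * t))).
  pose (dm := fun t => s * exp (- (b * t)) * nn t).
  pose (A := fun t => t * exp (- (b * t))).
  pose (B := fun t => (1 - exp (- (s * t))) / s).
  pose (f := fun t => 1 - exp (- t) * Tsum (S k) t - (1 - exp (- (s * t))) ^ S k).
  pose (df := fun t => exp (- (s * t)) / INR (fact k) * (A t ^ k - B t ^ k)).
  assert (Hesplit : forall t, exp (- (s * t)) = exp (- (b * t)) * exp (- (d * t))).
  { intro t. rewrite <- exp_plus. f_equal. unfold d. ring. }
  assert (HmAB : forall t, m t = s * (A t - B t)).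
  { intro t. unfold m, A, B. rewrite <- Hesplit. field. lra. }
  assert (Dnn : forall t, is_derive nn t (dnn t)).
  { intro t. unfold nn, dnn. auto_derive; [auto|ring]. }
  assert (Onn : forall x y, 0 <= x <= y -> nn x < 0 -> nn y <= nn x).
  { apply (once nn dnn Dnn).
    - unfold nn. replace (- (d * 0)) with 0 by ring. rewrite exp_0. ring.
    - intros t u Htu Ht. unfold dnn in *.
      assert (exp (- (d * u)) <= exp (- (d * t))) by (apply exp_le; unfold d in *; nra).
      unfold d in *. nra. }
  assert (Dm : forall t, is_derive m t (dm t)).
  { intro t. unfold m, dm, nn. auto_derive; [auto|]. unfold d. ring. }
  assert (Om : forall x y, 0 <= x <= y -> m x < 0 -> m y <= m x).
  { apply (once m dm Dm).
    - unfold m. replace (b * 0) with 0 by ring. replace (d * 0) with 0 by ring.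
      rewrite Ropp_0, exp_0. ring.
    - intros t u Htu Ht. unfold dm in *.
      assert (Hp : forall z, 0 < s * exp (- (b * z))) by (intro z; apply Rmult_lt_0_compat; [lra|apply exp_pos]).
      assert (nn t < 0).
      { apply Rnot_le_lt. intro Hc. pose proof (Hp t). nra. }
      assert (nn u <= nn t) by (apply Onn; [lra|assumption]).
      pose proof (Hp u). nra. }
  assert (Df : forall t, is_derive f t (df t)).
  { intro t.
    assert (H1 : is_derive (fun t => exp (- t)) t (-1 * exp (- t))) by (auto_derive; [auto|ring]).
    pose proof (Derive.is_derive_mult _ _ _ _ _ H1 (Tsum_derive k t)) as H2.
    assert (H3 : is_derive (fun t => (1 - exp (- (s * t))) ^ S k) t
                   (INR (S k) * (s * exp (- (s * t))) * (1 - exp (- (s * t))) ^ k)).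
    { auto_derive; [auto|]. change (match k with 0%nat => 1 | S _ => INR k + 1 end) with (INR (S k)). replace (1 + - exp (- (s * t))) with (1 - exp (- (s * t))) by ring. ring. }
    assert (H4 : is_derive f t (0 - (-1 * exp (- t) * Tsum (S k) t + exp (- t) * Tsum k t)
               - INR (S k) * (s * exp (- (s * t))) * (1 - exp (- (s * t))) ^ k)).
    { exact (is_derive_minus _ _ _ _ _ (is_derive_minus _ _ _ _ _ (is_derive_const 1 t) H2) H3). }
    replace (df t) with (0 - (-1 * exp (- t) * Tsum (S k) t + exp (- t) * Tsum k t)
               - INR (S k) * (s * exp (- (s * t))) * (1 - exp (- (s * t))) ^ k); [exact H4|].
    unfold df, A, B. cbv beta. change (Tsum (S k) t) with (Tsum k t + t ^ k / INR (fact k)).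
    rewrite Rpow_mult_distr, exp_pow'.
    replace (((1 - exp (- (s * t))) / s) ^ k) with ((1 - exp (- (s * t))) ^ k * / s ^ k)
      by (unfold Rdiv; rewrite Rpow_mult_distr, pow_inv; reflexivity).
    replace (INR k * - (b * t)) with (- t + s * t) by (replace (INR k * - (b * t)) with (- (INR k * b) * t) by ring; rewrite Hb; ring).
    rewrite exp_plus.
    replace (exp (s * t)) with (/ exp (- (s * t))) by (rewrite exp_Ropp, Rinv_inv; reflexivity).
    rewrite fact_simpl, mult_INR in Heq. change (s ^ S k) with (s * s ^ k) in Heq.
    pose proof (fact_pos' k). pose proof (exp_pos (- (s * t))).
    assert (Hsk : 0 < s ^ k) by (apply pow_lt; lra).
    replace (/ s ^ k) with (s * INR (S k) * INR (fact k)) by (apply Rmult_eq_reg_l with (s ^ k); [rewrite Rinv_r by lra; lra|lra]).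
    field. split; lra. }
  assert (HB0 : forall t, 0 <= t -> 0 <= B t).
  { intros t Ht. unfold B. apply Rdiv_le_0_compat; [|lra].
    assert (exp (- (s * t)) <= exp 0) by (apply exp_le; nra). rewrite exp_0 in H. lra. }
  assert (HA0 : forall t, 0 <= t -> 0 <= A t).
  { intros t Ht. unfold A. apply Rmult_le_pos; [lra|left; apply exp_pos]. }
  assert (Hc : forall t, 0 < exp (- (s * t)) / INR (fact k)).
  { intro t. apply Rdiv_lt_0_compat; [apply exp_pos|apply fact_pos']. }
  assert (Of : forall x y, 0 <= x <= y -> f x < 0 -> f y <= f x).
  { apply (once f df Df).
    - unfold f. rewrite Tsum_0. replace (- (s * 0)) with 0 by ring. rewrite Ropp_0, exp_0.
      replace (1 - 1) with 0 by ring. rewrite pow_i by lia. ring.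
    - intros t u Htu Ht. unfold df in *.
      assert (A t ^ k < B t ^ k).
      { apply Rnot_le_lt. intro Hn. pose proof (Hc t). nra. }
      assert (A t < B t).
      { apply Rnot_le_lt. intro Hn. assert (B t ^ k <= A t ^ k) by (apply pow_incr; split; [apply HB0; lra|exact Hn]). lra. }
      assert (Hmt : m t < 0).
      { rewrite HmAB. assert (0 < s * (B t - A t)) by (apply Rmult_lt_0_compat; lra). lra. }
      assert (Hmu : m u <= m t) by (apply Om; [lra|assumption]).
      assert (A u < B u).
      { assert (Hmu' : m u < 0) by lra. rewrite HmAB in Hmu'. apply Rnot_le_lt. intro Hn.
        assert (0 <= s * (A u - B u)) by (apply Rmult_le_pos; [exact (Rlt_le _ _ Hs)|apply Rge_le, Rge_minus, Rle_ge; exact Hn]). lra. }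
      assert (A u ^ k <= B u ^ k) by (apply pow_incr; split; [apply HA0; lra|lra]).
      pose proof (Hc u). nra. }
  apply Rnot_lt_le. intro Hlt.
  assert (Hfx : f x < 0) by (unfold f; lra).
  assert (Htail : forall y, 0 <= y -> f y >= - exp (- y) * Tsum (S k) y).
  { intros y Hy. unfold f.
    assert (Hp1 : (1 - exp (- (s * y))) ^ S k <= 1).
    { apply Rle_trans with (1 ^ S k); [|rewrite pow1; lra]. apply pow_incr. split.
      - assert (He0 : exp (- (s * y)) <= exp 0).
        { apply exp_le. assert (0 <= s * y) by (apply Rmult_le_pos; lra). lra. }
        rewrite exp_0 in He0. lra.
      - pose proof (exp_pos (- (s * y))). lra. }
    lra. }
  clearbody f. clear - Hfx Htail Of Hx.
  set (K := INR (S k) * INR (S (S k)) ^ S (S k)).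
  assert (HK : 0 <= K) by (unfold K; apply Rmult_le_pos; [apply pos_INR|apply pow_le, pos_INR]).
  assert (Tb : forall y, 0 <= y -> exp (- y) * Tsum (S k) y <= K / (1 + y)) by (intros; apply tail_bound; assumption).
  clearbody K.
  remember (- f x) as e eqn:He'.
  assert (He : 0 < e) by lra.
  remember (x + K / e) as y eqn:Hy'.
  assert (Hy : x <= y) by (assert (0 <= K / e) by (apply Rdiv_le_0_compat; lra); lra).
  assert (Hfy : f y <= f x) by (apply Of; [lra|exact Hfx]).
  assert (Hy0 : 0 <= y) by lra.
  pose proof (Tb y Hy0). pose proof (Htail y Hy0).
  assert (HKy : K / (1 + y) < e).
  { apply Rmult_lt_reg_r with (1 + y); [lra|]. unfold Rdiv. rewrite Rmult_assoc, Rinv_l by lra.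
    assert (Hey : e * y = e * x + K) by (subst y; field; lra).
    rewrite Rmult_1_r, Rmult_plus_distr_l, Rmult_1_r, Hey.
    assert (0 <= e * x) by (apply Rmult_le_pos; lra). lra. }
  lra.
Qed.

Lemma ln_le' a b : 0 < a -> a <= b -> ln a <= ln b.
Proof. intros Ha [H|H]; [left; apply ln_increasing; lra|subst; lra]. Qed.

Theorem proposition1 (NA NB : nat) (gB sigma Rb : R) :
  (1 <= NA)%nat -> (1 <= NB)%nat -> 0 < gB -> 0 < sigma < 1 -> 0 <= Rb ->
  p_suc NA NB gB (Rpower 2 Rb - 1) >= sigma ->
  Rb <= log2 (1 + gB * alpha NB *
          ln (/ (1 - Rpower (1 - sigma) (/ INR (NA * NB))))).
Proof.
  intros HNA HNB HgB Hsig HRb Hp.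
  assert (HF : 0 < INR (fact NB)) by apply fact_pos'.
  assert (HNBr : 0 < INR NB) by (apply lt_0_INR; lia).
  set (al := alpha NB).
  assert (Hal : al = Rpower (INR (fact NB)) (/ INR NB)).
  { unfold al, alpha, Gamma_nat. replace (NB + 1 - 1)%nat with NB by lia. reflexivity. }
  assert (Halp : 0 < al) by (rewrite Hal; unfold Rpower; apply exp_pos).
  assert (HalN : al ^ NB = INR (fact NB)).
  { rewrite <- Rpower_pow by exact Halp. rewrite Hal, Rpower_mult.
    rewrite Rinv_l by lra. apply Rpower_1; exact HF. }
  set (s := / al).
  assert (Hs : 0 < s) by (apply Rinv_0_lt_compat; exact Halp).
  assert (HsN : s ^ NB * INR (fact NB) = 1).
  { unfold s. rewrite pow_inv, HalN. field. lra. }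
  set (x := (Rpower 2 Rb - 1) / gB).
  assert (H2R : 1 <= Rpower 2 Rb).
  { rewrite <- (Rpower_O 2) by lra. apply Rle_Rpower; lra. }
  assert (Hx : 0 <= x) by (unfold x; apply Rdiv_le_0_compat; lra).
  pose proof (main_ineq NB s x HNB Hs HsN Hx) as Hmain.
  rewrite <- closed_form in Hmain by exact HNB.
  unfold p_suc in Hp. fold x in Hp.
  set (P := reg_lower_gamma NB x) in *.
  set (w := 1 - exp (- (s * x))) in *.
  assert (Hw0 : 0 <= w).
  { unfold w. assert (exp (- (s * x)) <= exp 0).
    { apply exp_le. assert (0 <= s * x) by (apply Rmult_le_pos; lra). lra. }
    rewrite exp_0 in H. lra. }
  assert (HwN : 0 <= w ^ NB) by (apply pow_le; exact Hw0).
  assert (HPNA : P ^ NA <= 1 - sigma) by lra.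
  assert (HwM : w ^ (NA * NB) <= 1 - sigma).
  { rewrite Nat.mul_comm, pow_mult. apply Rle_trans with (P ^ NA); [|exact HPNA].
    apply pow_incr. split; assumption. }
  set (M := INR (NA * NB)) in *.
  assert (HM : 0 < M) by (unfold M; apply lt_0_INR; lia).
  set (c := Rpower (1 - sigma) (/ M)).
  assert (Hwc : w <= c).
  { destruct Hw0 as [Hw|Hw].
    - assert (Ew : Rpower (w ^ (NA * NB)) (/ M) = w).
      { rewrite <- Rpower_pow by exact Hw. rewrite Rpower_mult. fold M.
        rewrite Rinv_r by lra. apply Rpower_1; exact Hw. }
      rewrite <- Ew. unfold c. apply Rle_Rpower_l.
      + left; apply Rinv_0_lt_compat; exact HM.
      + split; [apply pow_lt; exact Hw|exact HwM].
    - rewrite <- Hw. unfold c, Rpower. left; apply exp_pos. }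
  assert (Hc1 : c < 1).
  { unfold c, Rpower. apply Rlt_le_trans with (exp 0); [|rewrite exp_0; lra]. apply exp_increasing.
    assert (ln (1 - sigma) < 0) by (rewrite <- ln_1; apply ln_increasing; lra).
    assert (0 < / M) by (apply Rinv_0_lt_compat; exact HM). nra. }
  assert (Hexp : 1 - c <= exp (- (s * x))) by (unfold w in Hwc; lra).
  assert (Hln : ln (1 - c) <= - (s * x)).
  { rewrite <- (ln_exp (- (s * x))). apply ln_le'; lra. }
  rewrite ln_Rinv by lra.
  assert (Hx2 : x <= al * - ln (1 - c)).
  { assert (s * x <= - ln (1 - c)) by lra.
    unfold s in H. apply Rmult_le_compat_l with (r := al) in H; [|lra].
    rewrite <- Rmult_assoc, Rinv_r, Rmult_1_l in H by lra. exact H. }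
  assert (Hmu : Rpower 2 Rb <= 1 + gB * al * - ln (1 - c)).
  { unfold x in Hx2. apply Rmult_le_compat_l with (r := gB) in Hx2; [|lra].
    unfold Rdiv in Hx2. rewrite (Rmult_comm (Rpower 2 Rb - 1)), <- Rmult_assoc, Rinv_r, Rmult_1_l in Hx2 by lra.
    rewrite Rmult_assoc. lra. }
  unfold log2. apply Rmult_le_reg_r with (ln 2).
  { rewrite <- ln_1. apply ln_increasing; lra. }
  unfold Rdiv. rewrite Rmult_assoc, Rinv_l.
  2:{ apply Rgt_not_eq. rewrite <- ln_1. apply ln_increasing; lra. }
  rewrite Rmult_1_r.
  replace (Rb * ln 2) with (ln (Rpower 2 Rb)) by (unfold Rpower; rewrite ln_exp; reflexivity).
  apply ln_le'; lra.
Qed.
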